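(* Let $E$ be a set and $\mathrm{Dup}(E)$ the free duplicial algebra on $E$. Let $\{E,E\}\subseteq\mathrm{Dup}(E)$ be the smallest subspace containing $E$ and closed under the bracket $\{x,y\}=x\backslash y-x/y$. Then every element of $\mathrm{Dup}(E)$ is a finite linear combination of elements $z_1/z_2/\cdots/z_n$ with $n\ge1$ and $z_1,\dots,z_n\in\{E,E\}$.
   Context: A duplicial algebra over a field $K$ is a vector space $A$ with two bilinear products $/$ and $\backslash$ satisfying $x/(y/z)=(x/y)/z$, $x/(y\backslash z)=(x/y)\backslash z$ and $x\backslash(y\backslash z)=(x\backslash y)\backslash z$ for all $x,y,z\in A$. $\mathrm{Dup}(E)$ is the free duplicial algebra generated by the set $E$ (it can be realized on planar binary rooted trees with internal vertices coloured by $E$). The product $/$ is associative, so iterated products $z_1/\cdots/z_n$ are unambiguous. *)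

(* Defs.v *)
From mathcomp Require Import all_boot all_algebra.
Set Implicit Arguments. Unset Strict Implicit. Unset Printing Implicit Defensive.
Import GRing.Theory.
Local Open Scope ring_scope.

Section Dup.
Variable K : fieldType.

Definition bilin (V : lmodType K) (op : V -> V -> V) : Prop :=
  (forall (a : K) (x y z : V), op (a *: x + y) z = a *: op x z + op y z) /\
  (forall (a : K) (x y z : V), op x (a *: y + z) = a *: op x y + op x z).

(* (V, ov = "/", un = "\") is a duplicial algebra *)
Definition is_duplicial (V : lmodType K) (ov un : V -> V -> V) : Prop :=
  [/\ bilin ov, bilin un,
      (forall x y z, ov x (ov y z) = ov (ov x y) z),
      (forall x y z, ov x (un y z) = un (ov x y) z) &
      (forall x y z, un x (un y z) = un (un x y) z)].

Definition dup_morphism (V : lmodType K) (ov un : V -> V -> V)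
  (W : lmodType K) (ov' un' : W -> W -> W) (phi : V -> W) : Prop :=
  [/\ (forall (a : K) x y, phi (a *: x + y) = a *: phi x + phi y),
      (forall x y, phi (ov x y) = ov' (phi x) (phi y)) &
      (forall x y, phi (un x y) = un' (phi x) (phi y))].

Definition is_free_duplicial (E : Type) (V : lmodType K) (ov un : V -> V -> V)
  (i : E -> V) : Prop :=
  is_duplicial ov un /\
  forall (W : lmodType K) (ov' un' : W -> W -> W), is_duplicial ov' un' ->
  forall f : E -> W,
    exists phi : V -> W,
      [/\ dup_morphism ov un ov' un' phi, (forall e, phi (i e) = f e) &
          forall psi : V -> W, dup_morphism ov un ov' un' psi ->
            (forall e, psi (i e) = f e) -> forall x, psi x = phi x].

Definition subspace_pred (V : lmodType K) (S : V -> Prop) : Prop :=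
  S 0 /\ forall (a : K) x y, S x -> S y -> S (a *: x + y).

Definition bracket_closure (E : Type) (V : lmodType K) (ov un : V -> V -> V)
  (i : E -> V) (v : V) : Prop :=
  forall S : V -> Prop, subspace_pred S -> (forall e, S (i e)) ->
    (forall x y, S x -> S y -> S (un x y - ov x y)) -> S v.

(* iterated product z0 / z1 / ... / zk (left-associated; "/" is associative) *)
Definition iter_over (V : lmodType K) (ov : V -> V -> V) (z0 : V) (zs : seq V) : V :=
  foldl ov z0 zs.

End Dup.

(* Main.v *)
From HB Require Import structures.
Require Import Defs.
From mathcomp Require Import all_boot all_algebra.
From Stdlib Require Import ClassicalEpsilon.
Import GRing.Theory.
Local Open Scope ring_scope.
Set Implicit Arguments. Unset Strict Implicit.

Section Alg.
Variable K : fieldType.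
Variable E : Type.
Variable V : lmodType K.
Variables (ov un : V -> V -> V) (i : E -> V).
Hypothesis HD : is_duplicial ov un.

Definition linf (f : V -> V) := forall a x y, f (a *: x + y) = a *: f x + f y.

Lemma linf0 f : linf f -> f 0 = 0.
Proof.
move=> Hf; have := Hf 1 0 0; rewrite !scale1r addr0.
by move/(congr1 (fun v => v - f 0)); rewrite subrr addrK => <-.
Qed.

Lemma linfB f : linf f -> forall x y, f (x - y) = f x - f y.
Proof.
move=> Hf x y; have := Hf (-1) y x; rewrite !scaleN1r => H.
by rewrite addrC H addrC.
Qed.

Lemma linfD f : linf f -> forall x y, f (x + y) = f x + f y.
Proof. by move=> Hf x y; have := Hf 1 x y; rewrite !scale1r. Qed.

Lemma linL y (op : V -> V -> V) : bilin op -> linf (op^~ y).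
Proof. by case=> H1 _ a x z; apply: H1. Qed.
Lemma linR x (op : V -> V -> V) : bilin op -> linf (op x).
Proof. by case=> _ H2 a y z; apply: H2. Qed.

Definition B := bracket_closure ov un i.
Definition okp (p : K * (V * seq V)) := B p.2.1 /\ (forall z, z \in p.2.2 -> B z).
Definition G (x : V) := exists s : seq (K * (V * seq V)),
  (forall p, p \in s -> okp p) /\ x = \sum_(p <- s) p.1 *: iter_over ov p.2.1 p.2.2.

Lemma G0 : G 0.
Proof. by exists [::]; split => //; rewrite big_nil. Qed.

Lemma Glin a x y : G x -> G y -> G (a *: x + y).
Proof.
case=> sx [Hx ->] [sy [Hy ->]].
exists (map (fun p => (a * p.1, p.2)) sx ++ sy); split.
  move=> p; rewrite mem_cat => /orP [/mapP [q qs ->]|]; last exact: Hy.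
  exact: (Hx q qs).
rewrite big_cat big_map /= scaler_sumr; congr (_ + _).
by apply: eq_bigr => p _; rewrite scalerA.
Qed.

Lemma GD x y : G x -> G y -> G (x + y).
Proof. by move=> Hx Hy; have := Glin 1 Hx Hy; rewrite scale1r. Qed.
Lemma GB x y : G x -> G y -> G (x - y).
Proof. by move=> Hx Hy; have := Glin (-1) Hy Hx; rewrite scaleN1r addrC. Qed.

Lemma Gmon z0 zs : B z0 -> (forall z, z \in zs -> B z) -> G (iter_over ov z0 zs).
Proof.
move=> H0 Hs; exists [:: (1, (z0, zs))]; split.
  by move=> p; rewrite inE => /eqP ->.
by rewrite big_seq1 scale1r.
Qed.

Lemma G_of_lin f x : linf f ->
  (forall z0 zs, B z0 -> (forall z, z \in zs -> B z) -> G (f (iter_over ov z0 zs))) ->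
  G x -> G (f x).
Proof.
move=> Hf Hm [s [Hs ->]]; elim: s Hs => [|p s IH] Hs.
  by rewrite big_nil linf0 //; apply: G0.
rewrite big_cons Hf; apply: Glin.
  by case: (Hs p (mem_head _ _)) => ??; apply: Hm.
by apply: IH => q qs; apply: Hs; rewrite inE qs orbT.
Qed.

Lemma Bi e : B (i e).
Proof. by move=> S _ Hi _; apply: Hi. Qed.
Lemma Bbr x y : B x -> B y -> B (un x y - ov x y).
Proof. move=> Hx Hy S HS Hi Hb; apply: (Hb); [exact: Hx HS Hi Hb|exact: Hy HS Hi Hb]. Qed.

Lemma foldl_assoc x w0 ws : ov x (foldl ov w0 ws) = foldl ov (ov x w0) ws.
Proof.
case: HD => _ _ A _ _.
by elim: ws w0 => [|w ws IH] w0 //=; rewrite IH A.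
Qed.

Lemma GovG x y : G x -> G y -> G (ov x y).
Proof.
case: HD => H1 H2 _ _ _.
move=> Gx Gy; apply: (G_of_lin (f := ov^~ y)) Gx; first exact: linL.
move=> z0 zs Bz0 Bzs; apply: (G_of_lin (f := ov (iter_over ov z0 zs))) Gy;
  first exact: linR.
move=> w0 ws Bw0 Bws.
rewrite /iter_over foldl_assoc.
have -> : foldl ov (ov (foldl ov z0 zs) w0) ws = foldl ov z0 (zs ++ w0 :: ws)
  by rewrite foldl_cat.
apply: Gmon => // z.
rewrite mem_cat => /orP [/Bzs //|]; rewrite inE => /orP [/eqP -> //|/Bws //].
Qed.

Lemma GBunB y w : B y -> B w -> G (un y w).
Proof.
move=> By Bw; have -> : un y w = (un y w - ov y w) + ov y w by rewrite subrK.
apply: GD; first by have := @Gmon (un y w - ov y w) [::]; apply => //; apply: Bbr.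
by have := @Gmon y [:: w]; apply => // z; rewrite inE => /eqP ->.
Qed.

Lemma GunB x w : G x -> B w -> G (un x w).
Proof.
case: HD => H1 H2 _ A2 _.
move=> Gx Bw; apply: (G_of_lin (f := un^~ w)) Gx; first exact: linL.
move=> z0 zs Bz0; case/lastP: zs => [|zs y] Bzs; first exact: GBunB.
rewrite /iter_over foldl_rcons -A2; apply: GovG; first apply: Gmon => // z zi.
  by apply: Bzs; rewrite mem_rcons inE zi orbT.
by apply: GBunB => //; apply: Bzs; rewrite mem_rcons mem_head.
Qed.

Lemma key (n : nat) : forall (zs : seq V) (z0 a : V), (size zs <= n)%N -> G a -> B z0 ->
  (forall z, z \in zs -> B z) -> G (un a (iter_over ov z0 zs)).
Proof.
case: HD => H1 H2 A1 A2 A3.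
elim: n => [|n IH] zs z0 a.
  by case: zs => // _ Ga Bz0 _; apply: GunB.
case/lastP: zs => [|u' w] Hn Ga Bz0 Hzs; first by apply: GunB.
have Bw : B w by apply: Hzs; rewrite mem_rcons mem_head.
have Bu' : forall z, z \in u' -> B z.
  by move=> z zi; apply: Hzs; rewrite mem_rcons inE zi orbT.
rewrite size_rcons ltnS in Hn.
clear Hzs; case/lastP: u' Hn Bu' => [|u'' y] Hn Bu'.
  rewrite /iter_over /=.
  set br := un z0 w - ov z0 w.
  have -> : un a (ov z0 w) = un (un a z0) w - un a br.
    by rewrite /br (linfB (linR a H2)) A3 opprB addrC subrK.
  apply: GB; first by apply: GunB => //; apply: GunB.
  by apply: (IH [::]) => //; apply: Bbr.
have By : B y by apply: Bu'; rewrite mem_rcons mem_head.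
have Bu'' : forall z, z \in u'' -> B z.
  by move=> z zi; apply: Bu'; rewrite mem_rcons inE zi orbT.
rewrite size_rcons in Hn.
rewrite /iter_over !foldl_rcons.
set U := foldl ov z0 u''.
set br := un y w - ov y w.
have -> : un a (ov (ov U y) w) = un (un a (ov U y)) w - un a (ov U br).
  rewrite /br (linfB (linR U H1)) A2 A1 (linfB (linR a H2)) A3.
  by rewrite opprB addrC subrK.
apply: GB.
  apply: GunB => //.
  have := IH (rcons u'' y) z0 a; rewrite /iter_over foldl_rcons; apply => //.
  by rewrite size_rcons.
have := IH (rcons u'' br) z0 a; rewrite /iter_over foldl_rcons; apply => //.
  by rewrite size_rcons.
move=> z; rewrite mem_rcons inE => /orP [/eqP ->|/Bu'' //].
exact: Bbr.
Qed.

Lemma GunG x y : G x -> G y -> G (un x y).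
Proof.
case: HD => H1 H2 _ _ _.
move=> Gx Gy; apply: (G_of_lin (f := un x)) Gy; first exact: linR.
by move=> z0 zs Bz0 Bzs; apply: (@key (size zs)).
Qed.

End Alg.

From Stdlib Require Import ClassicalEpsilon.
Section Sub.
Variable K : fieldType.
Variable E : Type.
Variable V : lmodType K.
Variables (ov un : V -> V -> V) (i : E -> V).
Hypothesis HD : is_duplicial ov un.

Definition Gp : {pred V} := fun x =>
  if excluded_middle_informative (G ov un i x) then true else false.

Lemma GpP x : x \in Gp <-> G ov un i x.
Proof.
rewrite /in_mem /= /Gp; case: excluded_middle_informative => //.
Qed.

Lemma Gp_closed : GRing.subsemimod_closed Gp.
Proof.
split; [split|].
- by apply/GpP; apply: G0.
- by move=> x y /GpP Hx /GpP Hy; apply/GpP; apply: GD.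
- move=> a x /GpP Hx; apply/GpP.
  by have := Glin a Hx (@G0 _ _ _ ov un i); rewrite addr0.
Qed.

HB.instance Definition _ := GRing.isSubmodClosed.Build K V Gp Gp_closed.

Record GT := MkGT { gval : V; gvalP : gval \in Gp }.
HB.instance Definition _ := [isSub for gval].
HB.instance Definition _ := [Choice of GT by <:].
HB.instance Definition _ := [SubChoice_isSubLmodule of GT by <:].

Lemma gval_lin (a : K) (x y : GT) : gval (a *: x + y) = a *: gval x + gval y.
Proof.
change (val (a *: x + y) = a *: val x + val y).
by rewrite linearP.
Qed.


Lemma gval_inj : injective gval.
Proof. exact: val_inj. Qed.

Lemma ovP (x y : GT) : ov (gval x) (gval y) \in Gp.
Proof. by apply/GpP; apply: GovG => //; apply/GpP; apply: gvalP. Qed.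
Lemma unP (x y : GT) : un (gval x) (gval y) \in Gp.
Proof. by apply/GpP; apply: GunG => //; apply/GpP; apply: gvalP. Qed.

Definition ovT (x y : GT) : GT := MkGT (ovP x y).
Definition unT (x y : GT) : GT := MkGT (unP x y).

Lemma bilinT (op : V -> V -> V) (opT : GT -> GT -> GT) :
  (forall x y, gval (opT x y) = op (gval x) (gval y)) -> bilin op -> bilin opT.
Proof.
move=> E1 [H1 H2]; split=> a x y z; apply: gval_inj;
  by rewrite !(E1, gval_lin) ?H1 ?H2.
Qed.

Lemma dupT : is_duplicial ovT unT.
Proof.
case: HD => H1 H2 A1 A2 A3; split.
- exact: (bilinT (op := ov)).
- exact: (bilinT (op := un)).
- by move=> x y z; apply: gval_inj => /=; apply: A1.
- by move=> x y z; apply: gval_inj => /=; apply: A2.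
- by move=> x y z; apply: gval_inj => /=; apply: A3.
Qed.

Lemma GiP e : i e \in Gp.
Proof. by apply/GpP; have := @Gmon _ _ _ ov un i (i e) [::]; apply => //; apply: Bi. Qed.

End Sub.


Unset Implicit Arguments.
Theorem mainTheorem20 (K : fieldType) (E : Type) (V : lmodType K)
  (ov un : V -> V -> V) (i : E -> V) :
  is_free_duplicial ov un i ->
  forall x : V,
    exists s : seq (K * (V * seq V)),
      (forall p, p \in s ->
         bracket_closure ov un i p.2.1 /\
         (forall z, z \in p.2.2 -> bracket_closure ov un i z)) /\
      x = \sum_(p <- s) p.1 *: iter_over ov p.2.1 p.2.2.
Proof.
case=> HD Hu x.
have [phi [[Hl Hov Hun] Hi _]] :=
  Hu (GT ov un i) (@ovT _ _ _ ov un i HD) (@unT _ _ _ ov un i HD) (@dupT _ _ _ ov un i HD) (fun e => MkGT (GiP ov un i e)).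
have [phi0 [_ _ Hu0]] := Hu V ov un HD i.
have e1 : x = phi0 x.
  apply: (Hu0 id) => //; split => //.
have e2 : gval (phi x) = phi0 x.
  apply: (Hu0 (fun v => gval (phi v))); last by move=> e; rewrite Hi.
  split.
  - by move=> a u v; rewrite Hl gval_lin.
  - by move=> u v; rewrite Hov.
  - by move=> u v; rewrite Hun.
have : G ov un i x by rewrite e1 -e2; apply/GpP; apply: gvalP.
by [].
Qed.
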